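(* Let $a,b$ be real constants with $|a|,|b|\le 0.01$ and define, for real $x>1$, \[f(x)=\frac{(x+a)(x+1)+2b-2\sqrt{x^3+ax+b}\,\sqrt{1+a+b}}{(1-x)^2}.\] Then $f(x)\ge 0.19$ for all $x>1$. *)

(* Defs.v *)
From Stdlib Require Import Reals.
Open Scope R_scope.

Definition f_ab (a b x : R) : R :=
  ((x + a) * (x + 1) + 2 * b
   - 2 * sqrt (x ^ 3 + a * x + b) * sqrt (1 + a + b)) / (1 - x) ^ 2.

(* Main.v *)
Require Import Defs.
From Stdlib Require Import Reals Lra Psatz.
Open Scope R_scope.

Theorem lemmaA1 (a b : R) (ha : Rabs a <= 1/100) (hb : Rabs b <= 1/100) :
  forall x : R, 1 < x -> f_ab a b x >= 19/100.
Proof.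
  intros x hx. unfold f_ab.
  pose proof (Rle_abs a) as ha1. pose proof (Rle_abs (-a)) as ha3. rewrite Rabs_Ropp in ha3.
  pose proof (Rle_abs b) as hb1. pose proof (Rle_abs (-b)) as hb3. rewrite Rabs_Ropp in hb3.
  assert (ha2 : -1/100 <= a <= 1/100) by lra. assert (hb2 : -1/100 <= b <= 1/100) by lra.
  clear ha hb ha1 ha3 hb1 hb3.
  set (tv := x - 1).
  assert (ht : 0 < tv) by (unfold tv; lra).
  assert (hxe : x = 1 + tv) by (unfold tv; lra).
  set (u := x ^ 3 + a * x + b).
  set (v := 1 + a + b).
  assert (hu : 0 < u).
  { unfold u. rewrite hxe. nra. }
  assert (hv : 0 < v) by (unfold v; lra).
  set (P := (x + a) * (x + 1) + 2 * b - 19/100 * (x - 1) ^ 2).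
  assert (hP : 0 < P). { unfold P. rewrite hxe. nra. }
  set (K := 24/100 - 276/100 * a + a * a - 876/100 * b).
  set (L := 2 * (3 + a) * (81/100) - 4 * v).
  assert (hK : 0 < K) by (unfold K; nra).
  assert (hL : 0 < L) by (unfold L, v; lra).
  assert (hE : P ^ 2 - 4 * u * v = tv ^ 2 * (K + L * tv + (81/100)^2 * tv ^ 2)).
  { unfold P, u, K, L, v. rewrite hxe. field. }
  assert (hE0 : 0 <= P ^ 2 - 4 * u * v).
  { rewrite hE. apply Rmult_le_pos. nra. nra. }
  set (w := sqrt u * sqrt v).
  assert (hw0 : 0 <= w) by (unfold w; apply Rmult_le_pos; apply sqrt_pos).
  assert (hw2 : w * w = u * v).
  { unfold w. replace (sqrt u * sqrt v * (sqrt u * sqrt v)) with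
      ((sqrt u * sqrt u) * (sqrt v * sqrt v)) by ring.
    rewrite !sqrt_sqrt; lra. }
  assert (hw : 2 * w <= P) by nra.
  assert (hd : 0 < (1 - x) ^ 2) by (unfold tv in ht; nra).
  apply Rle_ge.
  apply (Rmult_le_reg_r ((1 - x) ^ 2)); [exact hd|].
  match goal with |- _ <= ?N / ?D * ?D => replace (N / D * D) with N by (field; lra) end.
  unfold P in hw. unfold w in hw.
  replace ((x - 1) ^ 2) with ((1 - x) ^ 2) in hw by ring.
  lra.
Qed.
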